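(* Let $R$ be a Bézout domain of finite Krull dimension. Then $R$ is radically finite if and only if $R$ is a principal ideal domain.
   Context: All rings are commutative with identity. An ideal $I$ of $R$ is called radically perfect if $\mathrm{ht}(I)=\inf\{n \mid \sqrt{I}=\sqrt{(\theta_1,\dots,\theta_n)} \text{ for some } \theta_1,\dots,\theta_n\in R\}$, and moreover, if $\mathrm{ht}(I)=0$, then $\sqrt{I}=\sqrt{(\theta)}$ for some zero divisor $\theta$ of $R$. A ring $R$ is called radically finite if every prime ideal $P$ of $R$ is radically perfect and, in addition, the set of ideals of $R$ that are generated by $\mathrm{ht}(P)$ elements and have radical $P$ has a maximal member $A$ such that there are only finitely many ideals in any chain of ideals between $A$ and $P$. *)

(* Defs.v *)
From mathcomp Require Import all_boot all_algebra.
Set Implicit Arguments. Unset Strict Implicit. Unset Printing Implicit Defensive.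
Import GRing.Theory.
Local Open Scope ring_scope.

Section IdealTheory.
Variable R : comNzRingType.

Definition subsetI (I J : R -> Prop) : Prop := forall x, I x -> J x.
Definition sameI (I J : R -> Prop) : Prop := forall x, I x <-> J x.

Definition is_ideal (I : R -> Prop) : Prop :=
  [/\ I 0, (forall x y, I x -> I y -> I (x + y)) & (forall a x, I x -> I (a * x))].

Definition is_prime (P : R -> Prop) : Prop :=
  [/\ is_ideal P, ~ P 1 & (forall a b, P (a * b) -> P a \/ P b)].

Definition gen (n : nat) (theta : 'I_n -> R) (x : R) : Prop :=
  exists c : 'I_n -> R, x = \sum_(i < n) c i * theta i.

Definition gen1 (d : R) (x : R) : Prop := exists c : R, x = c * d.

Definition rad (I : R -> Prop) (x : R) : Prop := exists k : nat, I (x ^+ k).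

Definition zero_divisor (t : R) : Prop := exists y : R, y != 0 /\ t * y = 0.

Definition prime_chain_below (P : R -> Prop) (n : nat) : Prop :=
  exists Q : nat -> (R -> Prop),
    [/\ (forall i, (i <= n)%N -> is_prime (Q i)),
        (forall i, (i < n)%N -> subsetI (Q i) (Q i.+1) /\
                                exists x, Q i.+1 x /\ ~ Q i x)
      & sameI (Q n) P].

(* ht(P) = h for a prime P, heights valued in nat extended by None = infinity *)
Definition prime_height (P : R -> Prop) (h : option nat) : Prop :=
  match h with
  | Some n => prime_chain_below P n /\ (forall m, prime_chain_below P m -> (m <= n)%N)
  | None => forall n, prime_chain_below P n
  end.

Definition rad_gen_inf (I : R -> Prop) (h : option nat) : Prop :=
  match h with
  | Some n => (exists theta : 'I_n -> R, sameI (rad I) (rad (gen theta))) /\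
              (forall m (theta : 'I_m -> R), (m < n)%N -> ~ sameI (rad I) (rad (gen theta)))
  | None => forall m (theta : 'I_m -> R), ~ sameI (rad I) (rad (gen theta))
  end.

(* radically perfect (stated for prime ideals, the only case used) *)
Definition radically_perfect (P : R -> Prop) : Prop :=
  (exists h, prime_height P h /\ rad_gen_inf P h) /\
  (prime_height P (Some 0%N) ->
     exists t, zero_divisor t /\ sameI (rad P) (rad (gen1 t))).

Definition gen_rad_set (P : R -> Prop) (n : nat) (A : R -> Prop) : Prop :=
  exists theta : 'I_n -> R, sameI A (gen theta) /\ sameI (rad A) P.

Definition finite_chains_between (A P : R -> Prop) : Prop :=
  forall C : (R -> Prop) -> Prop,
    (forall J, C J -> is_ideal J /\ subsetI A J /\ subsetI J P) ->
    (forall J K, C J -> C K -> subsetI J K \/ subsetI K J) ->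
    exists (N : nat) (f : nat -> (R -> Prop)),
      forall J, C J -> exists2 i, (i < N)%N & sameI J (f i).

Definition radically_finite : Prop :=
  forall P : R -> Prop, is_prime P ->
    radically_perfect P /\
    exists n, prime_height P (Some n) /\
      exists A, [/\ gen_rad_set P n A,
                    (forall B, gen_rad_set P n B -> subsetI A B -> subsetI B A)
                  & finite_chains_between A P].

Definition finite_krull_dim : Prop :=
  exists d : nat, forall P n, is_prime P -> prime_chain_below P n -> (n <= d)%N.

Definition bezout : Prop :=
  forall n (theta : 'I_n -> R), exists d : R, sameI (gen theta) (gen1 d).

Definition pid : Prop :=
  forall I : R -> Prop, is_ideal I -> exists d : R, sameI I (gen1 d).

End IdealTheory.

(* Main.v *)
Require Import Defs.
From mathcomp Require Import all_boot all_algebra.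
From mathcomp Require Import boolp classical_sets.
From mathcomp Require Import zify ring.
Require Import Defs.
Set Implicit Arguments. Unset Strict Implicit. Unset Printing Implicit Defensive.
Import GRing.Theory.
Local Open Scope ring_scope.

Section Helpers.
Variable R : idomainType.
Implicit Types (P I J K Q : R -> Prop) (d e p q x : R).

Lemma sameI_sym I J : sameI I J -> sameI J I.
Proof. by move=> H x; split; move/(H x). Qed.

Lemma sameI_trans I J K : sameI I J -> sameI J K -> sameI I K.
Proof. by move=> H1 H2 x; split => [/(H1 x)/(H2 x)|/(H2 x)/(H1 x)]. Qed.

Lemma gen_ideal (n : nat) (theta : 'I_n -> R) : is_ideal (gen theta).
Proof.
split.
- by exists (fun _ => 0); rewrite big1 // => i _; rewrite mul0r.
- move=> x y [c ->] [c' ->]; exists (fun i => c i + c' i).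
  by rewrite -big_split /=; apply: eq_bigr => i _; rewrite mulrDl.
- move=> a x [c ->]; exists (fun i => a * c i).
  by rewrite mulr_sumr; apply: eq_bigr => i _; rewrite mulrA.
Qed.

Lemma gen1_ideal d : is_ideal (gen1 d).
Proof.
split.
- by exists 0; rewrite mul0r.
- by move=> x y [c ->] [c' ->]; exists (c + c'); rewrite mulrDl.
- by move=> a x [c ->]; exists (a * c); rewrite mulrA.
Qed.

Lemma gen_mem n (theta : 'I_n -> R) i : gen theta (theta i).
Proof.
exists (fun j => (j == i)%:R).
rewrite (bigD1 i) //= eqxx mul1r big1 ?addr0 // => j /negPf ->; by rewrite mul0r.
Qed.

Lemma gen_min n (theta : 'I_n -> R) J :
  is_ideal J -> (forall i, J (theta i)) -> subsetI (gen theta) J.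
Proof.
case=> J0 JD JM Jt x [c ->].
apply: big_ind => // i _; exact: JM.
Qed.

Lemma gen1_mem d : gen1 d d. Proof. by exists 1; rewrite mul1r. Qed.

Lemma gen1_min d J : is_ideal J -> J d -> subsetI (gen1 d) J.
Proof. by case=> _ _ JM Jd x [c ->]; apply: JM. Qed.

Lemma gen_const n (e : R) : sameI (gen (fun _ : 'I_n.+1 => e)) (gen1 e).
Proof.
move=> x; split.
- apply: gen_min; [exact: gen1_ideal | move=> _; exact: gen1_mem].
- apply: gen1_min; [exact: gen_ideal | exact: (@gen_mem _ (fun _ : 'I_n.+1 => e) ord0)].
Qed.

Lemma gen0 (theta : 'I_0 -> R) x : gen theta x <-> x = 0.
Proof.
split; first by case=> c ->; rewrite big_ord0.
by move=> ->; exists (fun _ => 0); rewrite big_ord0.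
Qed.

Lemma rad_sub I J : subsetI I J -> subsetI (rad I) (rad J).
Proof. by move=> IJ x [k Hk]; exists k; apply: IJ. Qed.

Lemma rad_same I J : sameI I J -> sameI (rad I) (rad J).
Proof. by move=> IJ x; split; apply: rad_sub => y; case: (IJ y). Qed.

Lemma sub_rad I : subsetI I (rad I).
Proof. by move=> x Ix; exists 1%N; rewrite expr1. Qed.

Lemma rad_prime P : is_prime P -> sameI (rad P) P.
Proof.
case=> [[P0 PD PM] P1 Pp] x; split; last exact: sub_rad.
case=> k; elim: k => [|k IH]; first by rewrite expr0 => /P1.
by rewrite exprS => /Pp [//|]; exact: IH.
Qed.

Lemma rad_zero x : rad (fun y : R => y = 0) x -> x = 0.
Proof. by case=> k /eqP; rewrite expf_eq0 => /andP [_ /eqP]. Qed.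

Lemma zero_prime : is_prime (fun x : R => x = 0).
Proof.
split.
- split => //; first by move=> x y -> ->; rewrite addr0.
  by move=> a x ->; rewrite mulr0.
- by move/eqP; rewrite oner_eq0.
- by move=> a b /eqP; rewrite mulf_eq0 => /orP [/eqP|/eqP]; [left|right].
Qed.

Lemma chain_mono (Q : nat -> (R -> Prop)) n :
  (forall i, (i < n)%N -> subsetI (Q i) (Q i.+1)) ->
  forall i, (i <= n)%N -> subsetI (Q i) (Q n).
Proof.
move=> H i; move Hk: (n - i)%N => k; elim: k i Hk => [|k IH] i Hk Hin.
- have -> : i = n by lia.
  by [].
- move=> x Qx; apply: (IH i.+1); [lia | lia |].
  apply: (H i); [lia | exact: Qx].
Qed.

Lemma pid_no_between (Hpid : pid R) P Q p :
  is_prime P -> is_prime Q -> sameI P (gen1 p) ->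
  subsetI Q P -> (exists x, Q x /\ x != 0) -> (exists y, P y /\ ~ Q y) -> False.
Proof.
move=> [PI P1 Pp] [QI Q1 Qp] HP QP [x [Qx x0]] [y [Py Qy]].
have [q Hq] := Hpid Q QI.
have q0 : q != 0.
  apply: contra x0 => /eqP q0; have [c ->] := (Hq x).1 Qx.
  by rewrite q0 mulr0.
have Qq : Q q by apply/(Hq q).2; exact: gen1_mem.
have [c qc] := (HP q).1 (QP q Qq).
case: (Qp c p); first by rewrite -qc.
- move=> Qc; have [c' cc'] := (Hq c).1 Qc.
  apply: P1; apply/(HP 1).2; exists c'.
  have E : q * (c' * p) = q * 1.
    transitivity (c' * q * p); first ring.
    by rewrite -cc' -qc mulr1.
  by rewrite (mulfI q0 E).
- move=> Qp'; apply: Qy; apply: (gen1_min QI Qp'); exact: (HP y).1.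
Qed.

Lemma rf_P P n (theta : 'I_n -> R) :
  is_prime P -> sameI P (gen theta) -> prime_height P (Some n) ->
  (forall m (th : 'I_m -> R), (m < n)%N -> ~ sameI (rad P) (rad (gen th))) ->
  (prime_height P (Some 0%N) ->
     exists t, zero_divisor t /\ sameI (rad P) (rad (gen1 t))) ->
  radically_perfect P /\
    exists n, prime_height P (Some n) /\
      exists A, [/\ gen_rad_set P n A,
                    (forall B, gen_rad_set P n B -> subsetI A B -> subsetI B A)
                  & finite_chains_between A P].
Proof.
move=> HP HPt Hh Hmin H0; split.
  split=> //; exists (Some n); split=> //; split=> //; exists theta; exact: rad_same.
exists n; split=> //; exists (gen theta); split.
- exists theta; split=> //.
  apply: sameI_trans (rad_prime HP).
  exact/sameI_sym/rad_same.
- move=> B [th [HB HBr]] AB x Bx.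
  exact: (HPt x).1 ((HBr x).1 (sub_rad Bx)).
- move=> C HC _; exists 1%N, (fun _ => P) => J CJ; exists 0%N => // x.
  case: (HC J CJ) => _ [AJ JP]; split; first exact: JP.
  by move=> Px; apply: AJ; exact/(HPt x).1.
Qed.

Lemma pid_rf : pid R -> radically_finite R.
Proof.
move=> Hpid P HP; case: (HP) => PI P1 Pp.
have [d Hd] := Hpid P PI.
have P0 : P 0 by case: PI.
case: (eqVneq d 0) => [d0|dn0].
- have HPz : sameI P (fun x => x = 0).
    move=> x; split.
    + by move=> /(Hd x) [c ->]; rewrite d0 mulr0.
    + by move=> ->.
  have Hh : prime_height P (Some 0%N).
    split.
      exists (fun _ => P); split => //.
    move=> m [Q [HQ HQs HQP]]; case: m HQ HQs HQP => // m HQ HQs HQP.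
    have [_ [x [Q1x Q0x]]] := HQs 0%N isT.
    have : P x by apply/(HQP x); apply: (chain_mono (fun i Hi => (HQs i Hi).1)) Q1x.
    move=> /(HPz x) x0; exfalso; apply: Q0x; rewrite x0.
    by case: (HQ 0%N isT) => [[Q0 _ _] _ _].
  apply: (@rf_P P 0%N (fun _ => 0)) => //.
  + apply: sameI_trans HPz _ => x; exact: iff_sym (gen0 _ x).
  + move=> _; exists 0; split; first by exists 1; rewrite oner_eq0 mul0r.
    apply: rad_same; apply: sameI_trans HPz _ => x; split.
    * by move=> ->; exists 0; rewrite mulr0.
    * by case=> c ->; rewrite mulr0.
- have Hh : prime_height P (Some 1%N).
    split.
      exists (fun i => if i == 0%N then (fun x : R => x = 0) else P); split => //.
      + by case => [|i] _ //=; exact: zero_prime.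
      + case => // _; split; first by move=> x /= ->.
        exists d; split; [apply/(Hd d).2; exact: gen1_mem | exact/eqP].
    move=> m [Q [HQ HQs HQP]]; case: m HQ HQs HQP => [|[|m]] // HQ HQs HQP.
    exfalso.
    have HQm := HQ m.+1 (leqW (leqnn _)).
    apply: (pid_no_between Hpid HP HQm Hd).
    + move=> x Qx; apply/(HQP x); exact: (HQs m.+1 (leqnn _)).1.
    + have [_ [x [Qx Qx']]] := HQs m (leqW (leqnn _)).
      exists x; split => //; apply/eqP => x0; apply: Qx'; rewrite x0.
      by case: (HQ m (leqW (leqW (leqnn _)))) => [[Q0 _ _] _ _].
    + have [_ [y [Qy Qy']]] := HQs m.+1 (leqnn _).
      by exists y; split => //; apply/(HQP y).
  apply: (@rf_P P 1%N (fun _ => d)) => //.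
  + apply: sameI_trans Hd _; exact/sameI_sym/gen_const.
  + move=> [|m] th // _ Hs.
    have : rad (gen th) d by apply/(Hs d); apply: sub_rad; apply/(Hd d).2; exact: gen1_mem.
    move=> /(rad_sub (fun x => (gen0 th x).1)) /rad_zero d0.
    by move: dn0; rewrite d0 eqxx.
  + by move=> [_ /(_ 1%N) H]; exfalso; have := H Hh.1.
Qed.

Lemma prime_principal : bezout R -> radically_finite R ->
  forall P, is_prime P -> exists d, sameI P (gen1 d).
Proof.
move=> Hb Hrf P HP; case: (HP) => PI P1 Pp.
have P0 : P 0 by case: PI.
have [_ [n [_ [A [[theta [HA HAr]] Hmax _]]]]] := Hrf P HP.
have AP : subsetI A P by move=> y Ay; apply/(HAr y); exact: sub_rad.
case: n theta HA HAr Hmax => [|n] theta HA HAr Hmax.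
- exists 0 => x; split.
  + move=> Px; have : rad A x by apply/(HAr x).
    move=> /(rad_sub (fun y Ay => (gen0 theta y).1 ((HA y).1 Ay))) /rad_zero ->.
    by exists 0; rewrite mulr0.
  + by case=> c ->; rewrite mulr0.
- have [d Hd] := Hb _ theta.
  have PA : subsetI P A.
    move=> x Px.
    pose th2 := fun i : 'I_2 => if i == ord0 then d else x.
    have [e He] := Hb _ th2.
    have Gd : gen th2 d := @gen_mem _ th2 ord0.
    have Gx : gen th2 x := @gen_mem _ th2 ord_max.
    have Pd : P d by apply: AP; apply/(HA d).2/(Hd d).2; exact: gen1_mem.
    have Pe : P e.
      apply: (gen_min PI _ ((He e).2 (gen1_mem e))) => i.
      by rewrite /th2; case: ifP.
    pose B := gen (fun _ : 'I_n.+1 => e).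
    have HBe := gen_const n e.
    have BP : subsetI B P by move=> y /(HBe y) /(gen1_min PI Pe).
    have AB : subsetI A B.
      move=> y /(HA y).1 /(Hd y).1; apply: gen1_min; first exact: gen_ideal.
      by apply/(HBe d).2; apply/(He d).1.
    have HB : gen_rad_set P n.+1 B.
      exists (fun _ => e); split=> // y; split.
      * by move=> /(rad_sub BP) /(rad_prime HP y).
      * by move=> /(HAr y).2 /(rad_sub AB).
    apply: (Hmax B HB AB); apply/(HBe x).2; exact/(He x).1.
  exists d => y; split.
  + by move=> /PA /(HA y).1 /(Hd y).1.
  + by move=> /(Hd y).2 /(HA y).2 /AP.
Qed.

Local Open Scope classical_set_scope.
Lemma cohen : (forall P, is_prime P -> exists d, sameI P (gen1 d)) -> pid R.
Proof.
move=> Hp I0 I0I.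
case: (pselect (exists d, sameI I0 (gen1 d))) => // HnI0; exfalso.
pose Pz (X : set R) := X = set0 \/
  [/\ is_ideal X, ~ (exists d, sameI X (gen1 d)) & subsetI I0 X].
have [M [PM Mmax]] : exists A, Pz A /\ forall B, A `<` B -> ~ Pz B.
  apply: Zorn_bigcup => F FP Ftot.
  case: (pselect (exists X, F X /\ exists x, X x)) => [[X0 [FX0 [x0 X0x0]]]|Hne]; last first.
    left; apply/seteqP; split => // x [X FX Xx].
    by exfalso; apply: Hne; exists X; split => //; exists x.
  have Fid : forall X, F X -> forall x, X x ->
      [/\ is_ideal X, ~ (exists d, sameI X (gen1 d)) & subsetI I0 X].
    move=> X FX x Xx; case: (FP X FX) => // X0'.
    by move: Xx; rewrite X0'.
  have [X0I X0np X0I0] := Fid X0 FX0 x0 X0x0.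
  right; split.
  - split.
    + by exists X0 => //; case: X0I.
    + move=> x y [X1 FX1 X1x] [X2 FX2 X2y].
      case: (Ftot X1 X2 FX1 FX2) => S12.
      * have [[_ XD _] _ _] := Fid X2 FX2 y X2y.
        by exists X2 => //; apply: XD => //; apply: S12.
      * have [[_ XD _] _ _] := Fid X1 FX1 x X1x.
        by exists X1 => //; apply: XD => //; apply: S12.
    + move=> a x [X1 FX1 X1x]; have [[_ _ XM] _ _] := Fid X1 FX1 x X1x.
      by exists X1 => //; apply: XM.
  - move=> [d Hd].
    have [X1 FX1 X1d] : (\bigcup_(X in F) X) d by apply/(Hd d).2; exact: gen1_mem.
    have [X1I X1np _] := Fid X1 FX1 d X1d.
    apply: X1np; exists d => y; split.
    + by move=> X1y; apply/(Hd y).1; exists X1.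
    + by move=> /(gen1_min X1I X1d).
  - by move=> x /X0I0 X0x; exists X0.
have [MI Mnp MI0] : [/\ is_ideal M, ~ (exists d, sameI M (gen1 d)) & subsetI I0 M].
  case: PM => // M0; exfalso; apply: (Mmax I0).
  + rewrite M0; split => //; move=> /(_ 0); case: I0I => I00 _ _.
    by move=> /(_ I00).
  + by right; split.
case: (MI) => M0 MD MM.
have Hprinc : forall B, is_ideal B -> subsetI M B -> (exists y, B y /\ ~ M y) ->
    exists d, sameI B (gen1 d).
  move=> B BI MB [y [By My]].
  case: (pselect (exists d, sameI B (gen1 d))) => // Bnp; exfalso.
  apply: (Mmax B); first by split => // /(_ y By).
  right; split => // x /MI0; exact: MB.
have M1 : ~ M 1.
  move=> M1; apply: Mnp; exists 1 => x; split.
  + by move=> _; exists x; rewrite mulr1.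
  + by case=> c ->; apply: MM.
have [] := Hp M; last first.
  move=> d Hd; apply: Mnp; by exists d.
split => // a b Mab.
case: (pselect (M a)) => Ma; first by left.
case: (pselect (M b)) => Mb; first by right.
exfalso.
pose J1 := fun x => exists i c, M i /\ x = i + c * a.
have J1I : is_ideal J1.
  split.
  - by exists 0, 0; rewrite mul0r addr0.
  - move=> x y [i [c [Mi ->]]] [i' [c' [Mi' ->]]]; exists (i + i'), (c + c').
    by split; [apply: MD | ring].
  - move=> r x [i [c [Mi ->]]]; exists (r * i), (r * c).
    by split; [apply: MM | ring].
have [c0 Hc0] : exists d, sameI J1 (gen1 d).
  apply: Hprinc => //; last by exists a; split => //; exists 0, 1; rewrite add0r mul1r.
  by move=> x Mx; exists x, 0; rewrite mul0r addr0.
pose J2 := fun x => M (x * c0).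
have J2I : is_ideal J2.
  split.
  - by rewrite /J2 mul0r.
  - by move=> x y Hx Hy; rewrite /J2 mulrDl; apply: MD.
  - by move=> r x Hx; rewrite /J2 -mulrA; apply: MM.
have [e He] : exists d, sameI J2 (gen1 d).
  apply: Hprinc => //.
    by move=> x Mx; rewrite /J2 mulrC; apply: MM.
  exists b; split => //.
  have [i [c [Mi Hc]]] := (Hc0 c0).2 (gen1_mem c0).
  rewrite /J2 Hc mulrDr; apply: MD; first exact: MM.
  by rewrite mulrCA; apply: MM; rewrite mulrC.
apply: Mnp; exists (e * c0) => x; split.
- move=> Mx; have J1x : J1 x by exists x, 0; rewrite mul0r addr0.
  have [y Hy] := (Hc0 x).1 J1x.
  have J2y : J2 y by rewrite /J2 -Hy.
  have [z Hz] := (He y).1 J2y.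
  by exists z; rewrite Hy Hz mulrA.
- apply: gen1_min => //; exact: ((He e).2 (gen1_mem e)).
Qed.

End Helpers.

Theorem corollary2p4 (R : idomainType) :
  bezout R -> finite_krull_dim R -> (radically_finite R <-> pid R).
Proof.
move=> Hb _; split; last exact: pid_rf.
move=> Hrf; apply: cohen; exact: prime_principal.
Qed.
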